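(* Let $\mathbb{L}$ be an algebraically closed field, $a\in\mathbb{L}^{\times}$, $\Bbbk=\mathbb{L}(x)$ the field of rational functions, and $\sigma$ the automorphism of $\Bbbk$ which is the identity on $\mathbb{L}$ and sends $x\mapsto x+a$. Let $G_\sigma=\{\frac{r}{\sigma(r)}: r\in\Bbbk^\times\}$. Consider the group isomorphism $\mathbb{L}(x)^{\times}\to \mathbb{L}^{\times}\times \mathrm{Fsfun}(\mathbb{L},\mathbb{Z})$, $\alpha\mapsto (c_\alpha,\mathtt{m}_\alpha)$. Then the restriction of this isomorphism to $G_\sigma$ is an isomorphism of $G_\sigma$ onto $\{1\}\times\mathrm{Fsfun}_\sigma(\mathbb{L},\mathbb{Z})$; in other words, $\beta\mapsto \mathtt{m}_\beta$ defines a group isomorphism $G_\sigma\cong \mathrm{Fsfun}_\sigma(\mathbb{L},\mathbb{Z})$.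
   Context: Every $\alpha\in\mathbb{L}(x)^{\times}$ can be uniquely written as $\alpha=c_\alpha\prod_{t\in\mathbb{L}}(x-t)^{\mathtt{m}_\alpha(t)}$ with $c_\alpha\in\mathbb{L}^{\times}$ and $\mathtt{m}_\alpha:\mathbb{L}\to\mathbb{Z}$ a function with finite support (i.e. $\mathtt{m}_\alpha(t)\neq 0$ for only finitely many $t$). $\mathrm{Fsfun}(\mathbb{L},\mathbb{Z})$ denotes the additive group of all functions $\mathbb{L}\to\mathbb{Z}$ with finite support, and $\mathrm{Fsfun}_\sigma(\mathbb{L},\mathbb{Z})$ denotes its subgroup of those $\mathtt{m}$ such that $\sum_{i\in\mathbb{Z}}\mathtt{m}(t+ia)=0$ for every $t\in\mathbb{L}$. *)

(* Defs.v *)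
From HB Require Import structures.
From mathcomp Require Import all_boot all_order all_algebra.
From mathcomp Require Import generic_quotient fraction.
From mathcomp Require Import finmap.
From mathcomp Require Import boolp.
Set Implicit Arguments. Unset Strict Implicit. Unset Printing Implicit Defensive.
Import Order.TTheory GRing.Theory Num.Theory.
Local Open Scope ring_scope.

Notation ratfun L := {fraction {poly L}}.

Notation FsfunZ L := {fsfun L -> int for fun _ => 0%R}.

Notation tofrac := (@FracField.tofrac _).
Notation "x %:F" := (tofrac x) : ring_scope.

Section Defs.
Variable L : closedFieldType.

Definition sigma (a : L) (r : ratfun L) : ratfun L :=
  let pq := repr r in
  ((\n_pq \Po ('X + a%:P))%:F) / ((\d_pq \Po ('X + a%:P))%:F).

Definition Gsigma (a : L) (beta : ratfun L) : Prop :=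
  exists r : ratfun L, r != 0 /\ beta = r / sigma a r.

(* alpha = c * prod_t (x - t)^(m t), with c in L^x and m finitely supported:
   i.e. (c, m) = (c_alpha, m_alpha). *)
Definition factorization (alpha : ratfun L) (c : L) (m : FsfunZ L) : Prop :=
  c != 0 /\
  alpha = (c%:P)%:F * \prod_(t <- finsupp m) ((('X - t%:P)%:F) ^ (m t)).

Definition in_orbit (a t s : L) : Prop := exists i : int, s = t + i%:~R * a.

Definition Fsfun_sigma (a : L) (m : FsfunZ L) : Prop :=
  forall t : L,
    \sum_(s <- finsupp m | `[< in_orbit a t s >]) m s = 0.

End Defs.

(* Main.v *)
Require Import Defs.
From HB Require Import structures.
From mathcomp Require Import all_boot all_order all_algebra.
From mathcomp Require Import generic_quotient fraction finmap boolp.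
From mathcomp Require Import ring zify.
Import GRing.Theory.
Local Open Scope ring_scope.
Local Open Scope quotient_scope.

Lemma pi_ratio (R : idomainType) (r : {ratio R}) :
  \pi_{fraction R} r * (\d_r)%:F = (\n_r)%:F.
Proof.
unlock tofrac.
transitivity (\pi_{fraction R} (FracField.mulf r (Ratio \d_r 1))).
  exact: (esym (FracField.pi_mul r (Ratio \d_r 1))).
apply/eqmodP; rewrite /= FracField.equivfE /FracField.mulf.
have d0 := denom_ratioP r.
rewrite !numden_Ratio ?oner_eq0 ?mulf_neq0 ?oner_eq0 //.
by apply/eqP; ring.
Qed.

Lemma frac_repr {R : idomainType} (x : {fraction R}) :
  x = (\n_(repr x))%:F / (\d_(repr x))%:F.
Proof.
have d0 : (\d_(repr x)) != 0 by exact: denom_ratioP.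
by rewrite -pi_ratio mulfK ?tofrac_eq0 // reprK.
Qed.

Lemma frac_nd {R : idomainType} (x : {fraction R}) :
  exists n d, d != 0 /\ x = n%:F / d%:F.
Proof. by exists (\n_(repr x)), (\d_(repr x)); split; [apply: denom_ratioP|apply: frac_repr]. Qed.

Section S.
Variable L : closedFieldType.
Variable a : L.

Local Notation sh p := (p \Po ('X + a%:P)).

Lemma sh_eq0 (p : {poly L}) : (sh p == 0) = (p == 0).
Proof. by rewrite comp_poly2_eq0 // size_XaddC. Qed.

Lemma sigma_frac (n d : {poly L}) : d != 0 ->
  sigma a (n%:F / d%:F) = (sh n)%:F / (sh d)%:F.
Proof.
move=> d0; rewrite /sigma.
have e := frac_repr (n%:F / d%:F : ratfun L).
have d10 : \d_(repr (n%:F / d%:F)) != 0 by apply: denom_ratioP.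
move: e d10.
move: (\n_(repr (n%:F / d%:F))) (\d_(repr (n%:F / d%:F))) => n1 d1 e d10.
have E : n * d1 = n1 * d.
  apply/eqP; rewrite -tofrac_eq !tofracM -eqr_div ?tofrac_eq0 //; exact/eqP.
apply/eqP; rewrite eqr_div ?tofrac_eq0 ?sh_eq0 //.
by rewrite -!tofracM -!comp_polyM E.
Qed.

Lemma sigma_poly (p : {poly L}) : sigma a p%:F = (sh p)%:F.
Proof.
have := @sigma_frac p 1 (oner_neq0 _).
by rewrite tofrac1 divr1 comp_polyC tofrac1 divr1.
Qed.

Lemma sigmaM (f g : ratfun L) : sigma a (f * g) = sigma a f * sigma a g.
Proof.
have [n1 [d1 [d10 ->]]] := frac_nd f.
have [n2 [d2 [d20 ->]]] := frac_nd g.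
rewrite mulf_div -!tofracM !sigma_frac ?mulf_neq0 //.
by rewrite mulf_div -!tofracM !comp_polyM.
Qed.

Lemma sigma_neq0 (f : ratfun L) : f != 0 -> sigma a f != 0.
Proof.
have [n [d [d0 ->]]] := frac_nd f.
move=> nd0; have n0 : n != 0 by apply: contraNneq nd0 => ->; rewrite tofrac0; apply/eqP; exact: mul0r.
rewrite (@sigma_frac n d d0); apply: mulf_neq0; first by rewrite tofrac_eq0 sh_eq0.
by rewrite invr_eq0 tofrac_eq0 sh_eq0.
Qed.

Lemma sigma0 : sigma a 0 = 0.
Proof. by have := sigma_poly 0; rewrite comp_poly0 tofrac0. Qed.

Lemma sigmaV (f : ratfun L) : sigma a f^-1 = (sigma a f)^-1.
Proof.
have [n [d [d0 ->]]] := frac_nd f.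
have [->|n0] := eqVneq n 0.
  rewrite tofrac0 (mul0r (d%:F)^-1) invr0 sigma0; exact: (esym (invr0 _)).
rewrite invf_div (@sigma_frac n d d0) (@sigma_frac d n n0); exact: (esym (invf_div _ _)).
Qed.

Lemma sigma1 : sigma a 1 = 1.
Proof. have := sigma_poly 1; rewrite tofrac1 => ->; rewrite (comp_poly_multiplicative _).2; exact: tofrac1. Qed.

Definition G := Gsigma a.

Lemma G1 : G 1.
Proof. exists 1; split; first exact: oner_neq0. by rewrite sigma1 divr1. Qed.

Lemma GM x y : G x -> G y -> G (x * y).
Proof.
move=> [r [r0 ->]] [s [s0 ->]]; exists (r * s); split; first exact: (mulf_neq0 r0 s0).
rewrite sigmaM; exact: (mulf_div r (sigma a r) s (sigma a s)).
Qed.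

Lemma GV x : G x -> G x^-1.
Proof.
move=> [r [r0 ->]]; exists r^-1; split; first by rewrite invr_eq0.
rewrite sigmaV; exact: invfM.
Qed.

Lemma Gexpn x (n : nat) : G x -> G (x ^+ n).
Proof. by move=> Gx; elim: n => [|n IH]; [rewrite expr0; exact: G1|rewrite exprS; apply: GM]. Qed.

Lemma Gexpz x (k : int) : G x -> G (x ^ k).
Proof. by case: k => n Gx /=; [apply: Gexpn|apply/GV/Gexpn]. Qed.

Lemma Gprod (I : Type) (r : seq I) (P : pred I) (F : I -> ratfun L) :
  (forall i, P i -> G (F i)) -> G (\prod_(i <- r | P i) F i).
Proof. by move=> H; apply: big_ind => //; [exact: G1|exact: GM]. Qed.

Local Notation X s := (('X - s%:P)%:F : ratfun L).

Lemma X_neq0 s : X s != 0.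
Proof. by rewrite tofrac_eq0 polyXsubC_eq0. Qed.

Lemma Gbase s : G (X s / X (s - a)).
Proof.
exists (X s); split; first exact: X_neq0.
rewrite sigma_poly comp_polyB comp_polyX comp_polyC; congr (_ / _%:F).
by rewrite polyCB; ring.
Qed.

Lemma Gstep u (j : nat) : G (X u / X (u - j%:R * a)).
Proof.
elim: j => [|j IH]; first by rewrite (mul0r a) (subr0 u) (divff (X_neq0 u)); exact: G1.
have -> : X u / X (u - j.+1%:R * a) =
   (X u / X (u - j%:R * a)) * (X (u - j%:R * a) / X (u - j%:R * a - a)).
  rewrite mulrA (divfK (X_neq0 _)); congr (_ / X _).
  by rewrite -addn1 natrD; ring.
by apply: GM => //; apply: Gbase.
Qed.

Lemma Gorb t i : G (X t / X (t + i%:~R * a)).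
Proof.
case: i => j.
  have := Gstep (t + j%:R * a) j; rewrite addrK => /GV.
  by rewrite invf_div.
have := Gstep t j.+1.
by rewrite NegzE mulrNz mulNr.
Qed.


Local Notation PX s := (\prod_(z <- s) ('X - z%:P) : {poly L}).

Definition po (t : L) : pred L := fun s => `[< Defs.in_orbit a t s >].

Lemma orb_refl t : Defs.in_orbit a t t.
Proof. by exists 0; rewrite mul0r addr0. Qed.

Lemma orb_sym t s : Defs.in_orbit a t s -> Defs.in_orbit a s t.
Proof. by move=> [i ->]; exists (- i); rewrite mulrNz mulNr addrK. Qed.

Lemma orb_trans t s u : Defs.in_orbit a t s -> Defs.in_orbit a s u -> Defs.in_orbit a t u.
Proof. by move=> [i ->] [j ->]; exists (i + j); rewrite intrD mulrDl addrA. Qed.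

Arguments orb_sym {t s}.
Arguments orb_trans {t s u}.

Lemma orb_shift t s : Defs.in_orbit a t (s - a) <-> Defs.in_orbit a t s.
Proof.
split=> [[i Hi]|[i ->]].
  by exists (i + 1); rewrite intrD mulrDl mul1r addrA -Hi subrK.
by exists (i - 1); rewrite intrD mulrDl mulN1r addrA.
Qed.

Lemma count_shift t s : count (po t) (map (fun z => z - a) s) = count (po t) s.
Proof.
rewrite count_map; apply: eq_count => z /=.
by rewrite /po; apply: asbool_equiv_eq; exact: orb_shift.
Qed.

Lemma sh_prod s : sh (PX s) = PX (map (fun z => z - a) s).
Proof.
elim: s => [|z s IH]; first by rewrite !big_nil (comp_poly_multiplicative _).2.
rewrite /= !big_cons comp_polyM IH comp_polyB comp_polyX comp_polyC.
by congr (_ * _); rewrite polyCB; ring.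
Qed.

Lemma sh_factor c s : sh (c *: PX s) = c *: PX (map (fun z => z - a) s).
Proof. by rewrite comp_polyZ sh_prod. Qed.

Lemma mulZprod c1 c2 s1 s2 : (c1 *: PX s1) * (c2 *: PX s2) = (c1 * c2) *: PX (s1 ++ s2).
Proof. by rewrite big_cat -scalerAl -scalerAr scalerA. Qed.

Lemma factor_uniq c1 c2 s1 s2 : c1 != 0 -> c1 *: PX s1 = c2 *: PX s2 ->
  c1 = c2 /\ perm_eq s1 s2.
Proof.
move=> c10 E.
have lc : c1 = c2.
  have := congr1 lead_coef E.
  by rewrite !lead_coefZ !(monicP (monic_prod_XsubC _ _ _)) !mulr1.
split=> //; apply: prod_XsubC_eq; apply: (scalerI c10); by rewrite E lc.
Qed.

Lemma normal (p : {poly L}) : exists s, p = lead_coef p *: PX s.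
Proof. by have [s Hs] := closed_field_poly_normal p; exists s. Qed.

Lemma prod_nseq (R : comNzRingType) (F : L -> R) n t :
  \prod_(i <- nseq n t) F i = F t ^+ n.
Proof. by elim: n => [|n IH]; rewrite ?big_nil ?expr0 // /= big_cons IH exprS. Qed.

Definition np (k : int) : nat := if k is Posz n then n else 0%N.
Definition nn (k : int) : nat := if k is Negz n then n.+1 else 0%N.

Lemma int_split k : k = (np k)%:Z - (nn k)%:Z.
Proof. by case: k => n //=; rewrite ?subr0 // NegzE sub0r. Qed.

Definition rootsOf (S : seq L) (e : L -> nat) := flatten [seq nseq (e t) t | t <- S].

Lemma rootsOf_prod S e : PX (rootsOf S e) = \prod_(t <- S) ('X - t%:P) ^+ e t.
Proof.
rewrite /rootsOf big_flatten /= big_map; apply: eq_bigr => t _.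
by rewrite prod_nseq.
Qed.

Lemma rootsOf_count S e u : count (po u) (rootsOf S e) = (\sum_(t <- S | po u t) e t)%N.
Proof.
elim: S => [|t S IH]; first by rewrite big_nil.
rewrite /rootsOf /= count_cat count_nseq -/(rootsOf S e) IH big_cons.
by case: (po u t); rewrite ?mul1n ?mul0n.
Qed.

Lemma sum_Posz (I : Type) (r : seq I) (P : pred I) (F : I -> nat) :
  ((\sum_(i <- r | P i) F i)%N)%:Z = \sum_(i <- r | P i) (F i)%:Z.
Proof.
elim: r => [|i r IH]; first by rewrite !big_nil.
by rewrite !big_cons; case: (P i); rewrite ?PoszD IH.
Qed.


Lemma expz_split (F : fieldType) (x : F) k : x ^ k = x ^+ np k / x ^+ nn k.
Proof. by case: k => n /=; rewrite ?expr0 ?invr1 ?mulr1 ?mul1r. Qed.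

Lemma dir1 beta c (m : FsfunZ L) : beta != 0 -> factorization beta c m ->
  Gsigma a beta -> c = 1 /\ Fsfun_sigma a m.
Proof.
move=> b0 [c0 Hb] [r [r0 Hr]].
set S := finsupp m in Hb *.
set P := \prod_(t <- S) ('X - t%:P) ^+ np (m t).
set Q := \prod_(t <- S) ('X - t%:P) ^+ nn (m t).
have HPQ : \prod_(t <- S) (X t) ^ (m t) = P%:F / Q%:F.
  rewrite (eq_bigr (fun t => (('X - t%:P) ^+ np (m t))%:F / (('X - t%:P) ^+ nn (m t))%:F)); last first.
    by move=> t _; rewrite !tofracXn; exact: expz_split.
  rewrite prodf_div; congr (_ / _); by rewrite rmorph_prod.
have Hb2 : beta = (c%:P * P)%:F / Q%:F.
  rewrite Hb HPQ tofracM; exact: (mulrA (c%:P)%:F P%:F (Q%:F)^-1).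
have [n [d [d0 Er]]] := frac_nd r.
have n0 : n != 0.
  apply: contraNneq r0 => n0; rewrite Er n0 tofrac0; apply/eqP; exact: mul0r.
have Es : sigma a r = (sh n)%:F / (sh d)%:F by rewrite Er; exact: sigma_frac.
have PE : P = PX (rootsOf S (fun t => np (m t))) by rewrite rootsOf_prod.
have QE : Q = PX (rootsOf S (fun t => nn (m t))) by rewrite rootsOf_prod.
have Q0 : Q%:F != 0 by rewrite tofrac_eq0 QE monic_neq0 // monic_prod_XsubC.
have dn0 : (d * sh n)%:F != 0 by rewrite tofrac_eq0 mulf_neq0 // sh_eq0.
have E0 : (c%:P * P)%:F / Q%:F = (n * sh d)%:F / (d * sh n)%:F.
  rewrite -Hb2 Hr Es Er (invf_div (sh n)%:F (sh d)%:F).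
  rewrite (mulf_div n%:F d%:F (sh d)%:F (sh n)%:F) -!tofracM; reflexivity.
move/eqP: E0; rewrite eqr_div; [|exact: Q0|exact: dn0].
rewrite -!tofracM tofrac_eq => /eqP E.
have [sn Hn] := normal n; have [sd Hd] := normal d.
have ln0 : lead_coef n != 0 by rewrite lead_coef_eq0.
have ld0 : lead_coef d != 0 by rewrite lead_coef_eq0.
move: (lead_coef n) (lead_coef d) ln0 ld0 Hn Hd => ln ld ln0 ld0 Hn Hd.
rewrite Hn Hd !sh_factor PE QE mul_polyC -[PX (rootsOf S _) in RHS]scale1r in E.
rewrite !mulZprod in E.
have [E1 Hperm] := factor_uniq _ _ _ _ (mulf_neq0 c0 (mulf_neq0 ld0 ln0)) E.
split.
  apply: (mulIf (mulf_neq0 ld0 ln0)); rewrite mul1r E1 mulr1; exact: mulrC.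
move=> u.
have := permP Hperm (po u).
rewrite !count_cat !count_shift !rootsOf_count => Hc.
have Hc' : (\sum_(t <- S | po u t) np (m t))%N = (\sum_(t <- S | po u t) nn (m t))%N.
  move: Hc; move: (\sum_(t <- S | po u t) np (m t))%N (\sum_(t <- S | po u t) nn (m t))%N (count (po u) sd) (count (po u) sn) => x y p q; lia.
have -> : \sum_(s <- S | `[< Defs.in_orbit a u s >]) m s = \sum_(s <- S | po u s) m s by [].
rewrite (eq_bigr (fun s => (np (m s))%:Z - (nn (m s))%:Z)); last by move=> s _; rewrite -int_split.
by rewrite sumrB -!sum_Posz Hc' subrr.
Qed.


Lemma dir2 (m : FsfunZ L) beta : Fsfun_sigma a m ->
  beta = (1%:P)%:F * \prod_(t <- finsupp m) (X t) ^ (m t) -> Gsigma a beta.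
Proof.
move=> Hs ->; rewrite polyC1 tofrac1 mul1r.
set S := finsupp m.
pose rep t := head t [seq u <- S | po t u].
have po_refl t : po t t by apply/asboolP; exact: orb_refl.
have rep_in t : t \in S -> rep t \in S /\ Defs.in_orbit a t (rep t).
  move=> tS; have : t \in [seq u <- S | po t u] by rewrite mem_filter po_refl tS.
  rewrite /rep; case E: [seq u <- S | po t u] => [|u l] //= _.
  have : u \in [seq u <- S | po t u] by rewrite E mem_head.
  by rewrite mem_filter => /andP [/asboolP Hu uS].
have rep_eq t t' : t \in S -> Defs.in_orbit a t t' -> rep t = rep t'.
  move=> tS Htt'.
  have Ef : [seq u <- S | po t u] = [seq u <- S | po t' u].
    apply: eq_filter => u; apply: asbool_equiv_eq; split.
      by move=> H; apply: orb_trans (orb_sym Htt') H.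
    by move=> H; apply: orb_trans Htt' H.
  have : t \in [seq u <- S | po t u] by rewrite mem_filter po_refl tS.
  by rewrite /rep Ef; case: [seq u <- S | po t' u].
have Hsplit : \prod_(t <- S) X t ^ m t =
    (\prod_(t <- S) (X t / X (rep t)) ^ m t) * \prod_(t <- S) X (rep t) ^ m t.
  rewrite -big_split /=; apply: eq_bigr => t _.
  by rewrite -expfzMl (divfK (X_neq0 (rep t))).
have Hone : \prod_(t <- S) X (rep t) ^ m t = 1.
  set U := undup (map rep S).
  have Hpart : \prod_(t <- S) X (rep t) ^ m t =
      \prod_(u <- U) \prod_(t <- S | rep t == u) X u ^ m t.
    under [RHS]eq_bigr do rewrite big_mkcond.
    rewrite exchange_big /= big_seq [RHS]big_seq; apply: eq_bigr => t tS.
    have rU : rep t \in U by rewrite mem_undup map_f.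
    rewrite (bigD1_seq (rep t) rU (undup_uniq _)) /= eqxx big1 ?mulr1 //.
    by move=> u /negbTE; rewrite eq_sym => ->.
  rewrite Hpart big_seq big1 // => u uU.
  have Hm := big_morph (fun k => X u ^ k) (fun k1 k2 => expfzDr k1 k2 (X_neq0 u)) (expr0z (X u)).
  rewrite -Hm.
  have -> : \sum_(t <- S | rep t == u) m t = 0.
    move: uU; rewrite mem_undup => /mapP [t0 t0S ->].
    have [_ H0] := rep_in t0 t0S.
    transitivity (\sum_(s <- S | `[< Defs.in_orbit a (rep t0) s >]) m s); last exact: Hs.
    rewrite big_seq_cond [RHS]big_seq_cond; apply: eq_bigl => t.
    case tS: (t \in S) => //=.
    apply/eqP/asboolP.
      by move=> <-; apply: orb_sym; have [] := rep_in t tS.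
    move=> H; apply: esym; apply: rep_eq t0S _.
    exact: orb_trans H0 H.
  exact: expr0z.
rewrite Hsplit Hone mulr1 big_seq; apply: Gprod => t tS; apply: Gexpz.
have [_ [i ->]] := rep_in t tS; exact: Gorb.
Qed.

End S.

Theorem proposition4 (L : closedFieldType) (a : L) (ha : a != 0)
    (beta : ratfun L) (c : L) (m : FsfunZ L) :
  beta != 0 -> factorization beta c m ->
  (Gsigma a beta <-> (c = 1 /\ Fsfun_sigma a m)).
Proof.
move=> b0 Hf; split; first exact: dir1.
move=> [c1 Hs]; case: Hf => _ Hb; rewrite c1 in Hb; exact: dir2 Hs Hb.
Qed.
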